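(* Let $X$ be a metrizable space and let $\mathcal{K}$ be the ideal of all closed compact subsets of $X$. If $C(X)_\mathcal{K}$ is closed under uniform limits (i.e. whenever a sequence in $C(X)_\mathcal{K}$ converges uniformly on $X$ to some $f\in\mathbb{R}^X$, then $f\in C(X)_\mathcal{K}$), then the set of all non-isolated points of $X$ is a member of $\mathcal{K}$.
   Context: For $f\in\mathbb{R}^X$, $D_f$ denotes the set of points of discontinuity of $f$. For an ideal $\mathcal{P}$ of closed subsets of $X$ (a family of closed sets closed under finite unions and under passing to closed subsets), $C(X)_\mathcal{P}=\{f\in\mathbb{R}^X\colon \overline{D_f}\in\mathcal{P}\}$. *)

(* Defs.v *)
From HB Require Import structures.
From mathcomp Require Import all_boot all_order all_algebra.
From mathcomp Require Import all_classical all_reals all_analysis.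
Set Implicit Arguments. Unset Strict Implicit. Unset Printing Implicit Defensive.
Import Order.TTheory GRing.Theory Num.Theory.
Import numFieldNormedType.Exports.
Local Open Scope classical_set_scope.
Local Open Scope ring_scope.

Definition disc_points {R : realType} {X : topologicalType} (f : X -> R) : set X :=
  [set x | ~ {for x, continuous f}].

Definition in_K {X : topologicalType} (A : set X) : Prop := closed A /\ compact A.

Definition CK {R : realType} {X : topologicalType} : set (X -> R) :=
  [set f | in_K (closure (disc_points f))].

Definition unif_conv {R : realType} {X : Type} (fs : nat -> X -> R) (f : X -> R) : Prop :=
  forall e : R, 0 < e -> exists N : nat, forall n : nat, (N <= n)%N ->
    forall x : X, `|fs n x - f x| < e.

Definition non_isolated {X : topologicalType} : set X := [set x | ~ open [set x]].

(* Main.v *)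
Require Import Defs.
From HB Require Import structures.
From mathcomp Require Import all_boot all_order all_algebra.
From mathcomp Require Import all_classical all_reals all_analysis.
From mathcomp Require Import lra.
Import Order.TTheory GRing.Theory Num.Theory.
Local Open Scope classical_set_scope.
Local Open Scope ring_scope.

Lemma seqcpt {R : realType} {X : pseudoMetricType R} (A : set X) :
  closed A ->
  (forall x : nat -> X, (forall n, A (x n)) ->
     exists p, forall e, 0 < e -> forall N, exists2 n, (N <= n)%N & ball p e (x n)) ->
  compact A.
Proof.
move=> cA Hs; rewrite compact_ultra => F UF FA.
have PF : ProperFilter F := @ultra_proper _ _ UF.
have step1 : forall e : R, 0 < e -> exists c, F (ball c e).
  move=> e e0; apply: contrapT => /forallNP nb.
  have Fc : forall c, F (~` ball c e).
    by move=> c; case: (in_ultra_setVsetC (ball c e) UF) => // /nb.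
  have Fs : forall s : seq X,
      F (A `&` [set z | forall y, y \in s -> ~ ball y e z]).
    elim=> [|y s IH].
      by apply: filterS FA => z Az; split.
    apply: filterS (filterI IH (Fc y)) => z [[Az Hz] nyz]; split => // w.
    by rewrite in_cons => /orP [/eqP ->|ws]; [done| exact: Hz].
  have [g Hg] := choice (fun s : seq X => filter_ex (Fs s)).
  pose L := fix L n := if n is n.+1 then rcons (L n) (g (L n)) else [::].
  pose x n := g (L n).
  have Lx : forall m n, (m < n)%N -> x m \in L n.
    move=> m; elim=> // n IH; rewrite ltnS leq_eqVlt => /orP[/eqP ->|/IH].
      by rewrite /= mem_rcons in_cons eqxx.
    by rewrite /= mem_rcons in_cons => ->; rewrite orbT.
  have [p Hp] := Hs x (fun n => (Hg (L n)).1).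
  have e20 : 0 < e / 2 by rewrite divr_gt0.
  have [n1 _ b1] := Hp _ e20 0%N.
  have [n2 l2 b2] := Hp _ e20 n1.+1.
  apply: ((Hg (L n2)).2 (x n1) (Lx _ _ l2)).
  rewrite [e]splitr; exact: ball_triangle (ball_sym b1) b2.
have [c Hc] := choice (fun n : nat => step1 (n.+1%:R^-1) ltac:(by [])).
pose B n := A `&` [set z | forall k, (k <= n)%N -> ball (c k) (k.+1%:R^-1) z].
have FB : forall n, F (B n).
  elim=> [|n IH].
    apply: filterS (filterI FA (Hc 0%N)) => z [Az bz]; split => // k.
    by rewrite leqn0 => /eqP ->.
  apply: filterS (filterI IH (Hc n.+1)) => z [[Az Hz] bz]; split => // k.
  by rewrite leq_eqVlt => /orP[/eqP ->|]; [|rewrite ltnS; exact: Hz].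
have [y Hy] := choice (fun n => filter_ex (FB n)).
have [p Hp] := Hs y (fun n => (Hy n).1).
have Fp : F --> p.
  apply/fcvg_ballP => e e0.
  have e40 : 0 < e / 4 by rewrite divr_gt0.
  have [k _ Hk] := near_infty_natSinv_lt (PosNum e40).
  have hk := Hk k (leqnn k); rewrite /= in hk.
  have e20 : 0 < e / 2 by rewrite divr_gt0.
  have [n kn bn] := Hp _ e20 k.
  have byn := (Hy n).2 k kn.
  apply: filterS (Hc k) => z bz.
  apply: (@le_ball _ _ p (e / 2 + k.+1%:R^-1 + k.+1%:R^-1)).
    by move: hk; set r := k.+1%:R^-1 => hk; lra.
  exact: ball_triangle (ball_triangle bn (ball_sym byn)) bz.
exists p; split => //.
apply: cA => U /Fp FU.
exact: filter_ex (filterI FA FU).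
Qed.

Lemma nonisolated_closed (X : topologicalType) : closed (@non_isolated X).
Proof.
move=> p clp; apply: contrapT => /contrapT op.
have [z [zn zp]] := clp [set p] (open_nbhs_nbhs (conj op erefl)).
by move: zn; rewrite zp.
Qed.

Lemma noniso_nbhs {X : topologicalType} (y : X) (W : set X) :
  non_isolated y -> nbhs y W -> exists z, W z /\ z <> y.
Proof.
move=> ny Wy; apply: contrapT => /forallNP nz; apply: ny.
rewrite openE => _ ->; apply: filterS Wy => z Wz.
by apply: contrapT => zy; apply: (nz z).
Qed.

Lemma disc_sub {R : realType} (X : topologicalType) (g : X -> R) (S : set X) :
  closed S -> (forall z, g z != 0 -> S z) -> disc_points g `<=` S.
Proof.
move=> cS Hg y Dy; apply: contrapT => nSy; apply: Dy.
apply: (near_cst_continuous 0).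
have : nbhs y (~` S) by apply: open_nbhs_nbhs; split => //; exact: closed_openC.
apply: filterS => z nSz; apply/eqP; apply: contrapT => /negP gz.
exact: nSz (Hg _ gz).
Qed.

Lemma fin_closed {R : realType} (X : metricType R) (S : set X) :
  finite_set S -> closed S.
Proof. by move=> fS; apply: compact_closed; [exact: metric_hausdorff|exact: finite_compact]. Qed.

Theorem theorem3p2 (R : realType) (X : metricType R) :
  (forall (fs : nat -> X -> R) (f : X -> R),
      (forall n, CK (fs n)) -> unif_conv fs f -> CK f) ->
  in_K (@non_isolated X).
Proof.
move=> H; split; first exact: nonisolated_closed.
apply: seqcpt; first exact: nonisolated_closed.
move=> x Ax; apply: contrapT => nclus.
have ncl : forall p, exists e : R, 0 < e /\ exists N, forall n, (N <= n)%N -> ~ ball p e (x n).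
  move=> p; apply: contrapT => np; apply: nclus; exists p => e e0 N.
  apply: contrapT => nn; apply: np; exists e; split => //; exists N => n Nn bn.
  by apply: nn; exists n.
pose idx (y : X) : option nat := match pselect (exists k, x k = y) with
  | left h => Some (projT1 (cid h)) | right _ => None end.
have idxS : forall y k, idx y = Some k -> x k = y.
  move=> y k; rewrite /idx; case: pselect => [h [<-]|//]; exact: (projT2 (cid h)).
have idxN : forall y, idx y = None -> forall k, x k <> y.
  by move=> y; rewrite /idx; case: pselect => // h _ k xk; apply: h; exists k.
pose w (k : nat) : R := (k.+1%:R)^-1.
have w_gt0 : forall k, 0 < w k by move=> k; rewrite /w invr_gt0.
pose f y := if idx y is Some k then w k else 0.
pose fs n y := if idx y is Some k then (if (k < n)%N then w k else 0) else 0.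
have CKn : forall n, CK (fs n).
  move=> n.
  have fin : finite_set (x @` [set k | (k < n)%N]) by apply: finite_image; exact: finite_II.
  have cS := @fin_closed _ X _ fin.
  have sub : disc_points (fs n) `<=` x @` [set k | (k < n)%N].
    apply: disc_sub cS _ => z; rewrite /fs; case E: (idx z) => [k|]; last by rewrite eqxx.
    by case: ifP => kn; [move=> _; exists k => //; exact: idxS|rewrite eqxx].
  split; first exact: closed_closure.
  apply: (subclosed_compact (@closed_closure X (disc_points (fs n))) (finite_compact fin)).
  by rewrite ((closure_id _).1 cS); exact: closureS.
have UC : unif_conv fs f.
  move=> e e0; have [N _ HN] := near_infty_natSinv_lt (PosNum e0).
  exists N => n Nn y; rewrite /fs /f; case: (idx y) => [k|]; last by rewrite subrr normr0.
  case: ifP => kn; first by rewrite subrr normr0.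
  rewrite sub0r normrN ger0_norm ?(ltW (w_gt0 k)) //.
  apply: le_lt_trans (HN N (leqnn N)).
  rewrite /w lef_pV2 ?posrE // ler_nat ltnS.
  by apply: leq_trans Nn _; rewrite leqNgt kn.
have [_ cpt] := H fs f CKn UC.
have Dx : forall k, disc_points f (x k).
  move=> k cont.
  have [e [e0 [N HN]]] := ncl (x k).
  pose S := x @` [set n | (n < N)%N /\ x n <> x k].
  have fin : finite_set S.
    apply: finite_image; apply: sub_finite_set (finite_II N) => n [].
    by [].
  have cS := @fin_closed _ X _ fin.
  have nS : ~ S (x k) by case=> n [_ ?] ?.
  have nb : nbhs (x k) (~` S) by apply: open_nbhs_nbhs; split => //; exact: closed_openC.
  have c0 : 0 < f (x k).
    rewrite /f; case E: (idx (x k)) => [j|] //; by have := idxN _ E k.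
  have nc := cvgr_dist_lt _ _ cont _ c0.
  have W : nbhs (x k) [set z | `|f (x k) - f z| < f (x k) /\ ~ S z /\ ball (x k) e z].
    near=> z; split; last split.
    - near: z; exact: nc.
    - near: z; exact: nb.
    - near: z; exact: nbhsx_ballx.
  have [z [[hz [nSz bz]] zne]] := @noniso_nbhs _ (x k) _ (Ax k) W.
  have fz : f z = 0.
    rewrite /f; case E: (idx z) => [m|] //; have xm := idxS _ _ E.
    case: (ltnP m N) => mN.
      by exfalso; apply: nSz; exists m => //; split => //; rewrite xm.
    by exfalso; apply: (HN m mN); rewrite xm.
  by move: hz; rewrite fz subr0 ger0_norm ?ltxx // ltW.
have [p Hp] : exists p, forall e : R, 0 < e -> forall N, exists2 n, (N <= n)%N & ball p e (x n).
  have Fc : (x @ \oo) (closure (disc_points f)).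
    by apply: filterS (nbhs_infty_ge 0) => n _; exact: subset_closure (Dx n).
  have [q [_ clq]] := cpt (x @ \oo) _ Fc.
  exists q => e e0 N.
  have FN : (x @ \oo) (x @` [set n | (N <= n)%N]).
    by apply: filterS (nbhs_infty_ge N) => n Nn; exists n.
  have [z [[n Nn <-] bz]] := clq _ _ FN (@nbhsx_ballx _ _ q e e0).
  by exists n.
have [e [e0 [N HN]]] := ncl p.
have [n Nn bn] := Hp e e0 N.
exact: HN n Nn bn.
Unshelve. all: by end_near.
Qed.
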